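(* The logic $\mathsf{ICK}\oplus((p\wedge(p\mathrel{\Box\!\!\!\rightarrow} q))\to q)$ is sound and complete with respect to the class of conditional frames $(X,\leq,\mathcal{R})$ satisfying: if $x\in a$ then $x\in{\uparrow}(R_a[x])$, for all worlds $x$ and upsets $a$.
   Context: Formulas: $\phi ::= p\mid\bot\mid\phi\wedge\phi\mid\phi\vee\phi\mid\phi\to\phi\mid\phi\mathrel{\Box\!\!\!\rightarrow}\phi$. $\mathsf{ICK}\oplus\Gamma$ is the smallest set containing intuitionistic propositional logic, $\Gamma$, $(p\mathrel{\Box\!\!\!\rightarrow}(q\wedge r))\leftrightarrow((p\mathrel{\Box\!\!\!\rightarrow} q)\wedge(p\mathrel{\Box\!\!\!\rightarrow} r))$ and $(p\mathrel{\Box\!\!\!\rightarrow}\top)\leftrightarrow\top$, closed under uniform substitution, modus ponens and congruence rules for both arguments of $\mathrel{\Box\!\!\!\rightarrow}$. A conditional frame is $(X,\leq,\mathcal{R})$, $(X,\leq)$ a nonempty preorder, $\mathcal{R}=\{R_a\mid a\text{ an upset}\}$ with $(\leq\circ R_a)\subseteq(R_a\circ\leq)$; valuations assign upsets to letters and $x\models\phi\mathrel{\Box\!\!\!\rightarrow}\psi$ iff every $y$ with $xR_{V(\phi)}y$ satisfies $\psi$. ${\uparrow}S$ is the upward closure of $S$. *)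

(* Defs.v *)
Inductive form : Type :=
| Var  : nat -> form
| Bot  : form
| And  : form -> form -> form
| Or   : form -> form -> form
| Imp  : form -> form -> form
| Cond : form -> form -> form.

Definition Top : form := Imp Bot Bot.
Definition Iff (a b : form) : form := And (Imp a b) (Imp b a).

Fixpoint subst (s : nat -> form) (f : form) : form :=
  match f with
  | Var n => s n
  | Bot => Bot
  | And a b => And (subst s a) (subst s b)
  | Or a b => Or (subst s a) (subst s b)
  | Imp a b => Imp (subst s a) (subst s b)
  | Cond a b => Cond (subst s a) (subst s b)
  end.

Definition p : form := Var 0.
Definition q : form := Var 1.
Definition r : form := Var 2.

Inductive ipc_axiom : form -> Prop :=
| A_K  : forall a b, ipc_axiom (Imp a (Imp b a))
| A_S  : forall a b c,
    ipc_axiom (Imp (Imp a (Imp b c)) (Imp (Imp a b) (Imp a c)))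
| A_AndE1 : forall a b, ipc_axiom (Imp (And a b) a)
| A_AndE2 : forall a b, ipc_axiom (Imp (And a b) b)
| A_AndI  : forall a b, ipc_axiom (Imp a (Imp b (And a b)))
| A_OrI1  : forall a b, ipc_axiom (Imp a (Or a b))
| A_OrI2  : forall a b, ipc_axiom (Imp b (Or a b))
| A_OrE   : forall a b c,
    ipc_axiom (Imp (Imp a c) (Imp (Imp b c) (Imp (Or a b) c)))
| A_Bot   : forall a, ipc_axiom (Imp Bot a).

Definition ICK_ax_and : form :=
  Iff (Cond p (And q r)) (And (Cond p q) (Cond p r)).
Definition ICK_ax_top : form := Iff (Cond p Top) Top.

Inductive ICK_plus (Gamma : form -> Prop) : form -> Prop :=
| D_ipc   : forall f, ipc_axiom f -> ICK_plus Gamma f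
| D_gamma : forall f, Gamma f -> ICK_plus Gamma f
| D_and   : ICK_plus Gamma ICK_ax_and
| D_top   : ICK_plus Gamma ICK_ax_top
| D_subst : forall s f, ICK_plus Gamma f -> ICK_plus Gamma (subst s f)
| D_mp    : forall a b, ICK_plus Gamma (Imp a b) -> ICK_plus Gamma a ->
              ICK_plus Gamma b
| D_congL : forall a b c, ICK_plus Gamma (Iff a b) ->
              ICK_plus Gamma (Iff (Cond a c) (Cond b c))
| D_congR : forall a b c, ICK_plus Gamma (Iff a b) ->
              ICK_plus Gamma (Iff (Cond c a) (Cond c b)).

Definition MP_axiom : form := Imp (And p (Cond p q)) q.
Definition Gamma_MP (f : form) : Prop := f = MP_axiom.

Definition upset {X : Type} (le : X -> X -> Prop) (a : X -> Prop) : Prop :=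
  forall x y, le x y -> a x -> a y.

Record frame : Type := {
  world :> Type;
  fle : world -> world -> Prop;
  (* R_a, meaningful for upsets a *)
  fR : (world -> Prop) -> world -> world -> Prop;
  f_inhabited : inhabited world;
  fle_refl : forall x, fle x x;
  fle_trans : forall x y z, fle x y -> fle y z -> fle x z;
  f_coh : forall a, upset fle a ->
    forall x y z, fle x y -> fR a y z -> exists w, fR a x w /\ fle w z
}.

Definition valuation (F : frame) : Type := nat -> world F -> Prop.
Definition upset_valuation (F : frame) (V : valuation F) : Prop :=
  forall n, upset (fle F) (V n).

Fixpoint forces (F : frame) (V : valuation F) (x : world F) (f : form) : Prop :=
  match f with
  | Var n => V n x
  | Bot => False
  | And a b => forces F V x a /\ forces F V x b
  | Or a b => forces F V x a \/ forces F V x b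
  | Imp a b => forall y, fle F x y -> forces F V y a -> forces F V y b
  | Cond a b => forall y, fR F (fun z => forces F V z a) x y -> forces F V y b
  end.

Definition valid_in (F : frame) (f : form) : Prop :=
  forall V : valuation F, upset_valuation F V -> forall x : world F, forces F V x f.

Definition refl_cond (F : frame) : Prop :=
  forall (a : world F -> Prop), upset (fle F) a ->
    forall x, a x -> exists y, fR F a x y /\ fle F y x.

(* Main.v *)
Require Import Defs.
From Stdlib Require Import Classical ClassicalEpsilon FunctionalExtensionality PropExtensionality Arith Cantor.

Notation Thm := (ICK_plus Gamma_MP).

Definition pc (a b : nat) : nat := Cantor.to_nat (a, b).
Lemma pc_inj : forall a b c d, pc a b = pc c d -> a = c /\ b = d.
Proof. intros a b c d H. unfold pc in H.
  assert (E : (a, b) = (c, d)) by (rewrite <- (cancel_of_to (a,b)), H, cancel_of_to; reflexivity).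
  injection E; auto. Qed.
Global Opaque pc.

Fixpoint code (f : form) : nat :=
  match f with
  | Var n => pc 0 n
  | Bot => pc 1 0
  | And a b => pc 2 (pc (code a) (code b))
  | Or a b => pc 3 (pc (code a) (code b))
  | Imp a b => pc 4 (pc (code a) (code b))
  | Cond a b => pc 5 (pc (code a) (code b))
  end.

Lemma code_inj : forall f g, code f = code g -> f = g.
Proof.
  induction f; destruct g; simpl; intro H; apply pc_inj in H; destruct H as [H1 H2];
  try discriminate; try (subst; reflexivity);
  apply pc_inj in H2; destruct H2; f_equal; auto.
Qed.

Definition enum (n : nat) : form :=
  epsilon (inhabits Bot) (fun f => code f = n).

Lemma enum_surj : forall f, exists n, enum n = f.
Proof.
  intro f. exists (code f). apply code_inj.
  apply (epsilon_spec (inhabits Bot) (fun g => code g = code f)). exists f; reflexivity.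
Qed.

Lemma persist F V (hV : upset_valuation F V) f :
  forall x y, fle F x y -> forces F V x f -> forces F V y f.
Proof.
  induction f; simpl; intros x y Hxy Hx.
  - exact (hV n x y Hxy Hx).
  - exact Hx.
  - destruct Hx; split; eauto.
  - destruct Hx; [left|right]; eauto.
  - intros z Hyz Hz. apply (Hx z); auto. eapply fle_trans; eauto.
  - intros z Hz.
    destruct (f_coh F (fun w => forces F V w f1) (fun u v => IHf1 u v) x y z Hxy Hz)
      as [w [Hw Hwz]].
    eauto.
Qed.

Lemma subst_forces F V s f : forall x,
  forces F V x (subst s f) <-> forces F (fun n z => forces F V z (s n)) x f.
Proof.
  induction f; simpl; intro x.
  - tauto.
  - tauto.
  - rewrite IHf1, IHf2; tauto.
  - rewrite IHf1, IHf2; tauto.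
  - split; intros H y Hy; specialize (H y Hy); rewrite ?IHf1, ?IHf2 in *; auto.
  - assert (E : (fun z => forces F V z (subst s f1)) =
                (fun z => forces F (fun n z => forces F V z (s n)) z f1)).
    { apply functional_extensionality; intro z; apply propositional_extensionality; auto. }
    rewrite E. split; intros H y Hy; specialize (H y Hy); rewrite ?IHf2 in *; auto.
Qed.

Lemma soundness f : Thm f -> forall F, refl_cond F -> valid_in F f.
Proof.
  intro Hd; induction Hd; intros F HF; unfold valid_in; intros V hV x.
  - destruct H; simpl; intros.
    all: repeat match goal with H : _ /\ _ |- _ => destruct H end.
    all: eauto 7 using persist, fle_trans, fle_refl.
    + destruct H4; eauto using fle_trans, fle_refl.
    + simpl in *; contradiction.
  - unfold Gamma_MP in H; subst f. simpl. intros y Hxy [Hp Hc].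
    destruct (HF (fun z => forces F V z p) (fun u v => persist F V hV p u v) y Hp)
      as [z [Hz Hzy]].
    exact (persist F V hV q z y Hzy (Hc z Hz)).
  - simpl. split; intros y _ H.
    + split; intros z Hz; apply H in Hz; tauto.
    + destruct H as [H1 H2]. intros z Hz; split; auto.
  - simpl. split; intros y _ H; intros; auto.
  - apply subst_forces. apply IHHd; auto.
    intros n u v Huv Hu. exact (persist F V hV (s n) u v Huv Hu).
  - simpl in IHHd1. apply (IHHd1 F HF V hV x x (fle_refl F x)).
    apply IHHd2; auto.
  - assert (E : (fun z => forces F V z a) = (fun z => forces F V z b)).
    { apply functional_extensionality; intro z; apply propositional_extensionality.
      destruct (IHHd F HF V hV z) as [H1 H2]. split; intro.
      - apply (H1 z (fle_refl F z)); auto.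
      - apply (H2 z (fle_refl F z)); auto. }
    simpl. rewrite E. split; intros y _ H; exact H.
  -     simpl. split; intros y _ H z Hz; specialize (H z Hz).
    + exact (proj1 (IHHd F HF V hV z) z (fle_refl F z) H).
    + exact (proj2 (IHHd F HF V hV z) z (fle_refl F z) H).
Qed.

Lemma ax f : ipc_axiom f -> Thm f. Proof. apply D_ipc. Qed.
Lemma mp a b : Thm (Imp a b) -> Thm a -> Thm b. Proof. apply D_mp. Qed.

Lemma imp_refl a : Thm (Imp a a).
Proof.
  eapply mp. eapply mp. apply ax, (A_S a (Imp a a) a).
  apply ax, A_K. apply ax, (A_K a a).
Qed.

Lemma imp_trans a b c : Thm (Imp a b) -> Thm (Imp b c) -> Thm (Imp a c).
Proof.
  intros H1 H2. eapply mp. eapply mp. apply ax, (A_S a b c).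
  eapply mp. apply ax, A_K. exact H2. exact H1.
Qed.

Lemma iff_intro a b : Thm (Imp a b) -> Thm (Imp b a) -> Thm (Iff a b).
Proof. intros. unfold Iff. eapply mp. eapply mp. apply ax, A_AndI. all: auto. Qed.
Lemma iff_l a b : Thm (Iff a b) -> Thm (Imp a b).
Proof. intros. eapply mp. apply ax, A_AndE1. exact H. Qed.
Lemma iff_r a b : Thm (Iff a b) -> Thm (Imp b a).
Proof. intros. eapply mp. apply ax, A_AndE2. exact H. Qed.

Lemma thm_and c x y : Thm (Iff (Cond c (And x y)) (And (Cond c x) (Cond c y))).
Proof.
  exact (D_subst _ (fun n => match n with 0 => c | 1 => x | _ => y end) _ (D_and _)).
Qed.

Lemma cond_mono c P Q : Thm (Imp P Q) -> Thm (Imp (Cond c P) (Cond c Q)).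
Proof.
  intro H.
  assert (E : Thm (Iff P (And P Q))).
  { apply iff_intro.
    - eapply mp. eapply mp. apply ax, (A_S P Q (And P Q)). apply ax, A_AndI. exact H.
    - apply ax, A_AndE1. }
  apply (D_congR _ _ _ c) in E.
  eapply imp_trans. apply iff_l, E.
  eapply imp_trans. apply iff_l, thm_and. apply ax, A_AndE2.
Qed.

Lemma cond_thm c P : Thm P -> Thm (Cond c P).
Proof.
  intro H. eapply mp. apply cond_mono with (P := Top).
  eapply mp. apply ax, A_K. exact H.
  eapply mp. apply iff_r.
  exact (D_subst _ (fun n => c) _ (D_top _)).
  apply imp_refl.
Qed.

Lemma thm_MP a b : Thm (Imp (And a (Cond a b)) b).
Proof.
  exact (D_subst _ (fun n => match n with 0 => a | _ => b end) _
           (D_gamma _ _ (eq_refl MP_axiom))).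
Qed.

Inductive Der (G : form -> Prop) : form -> Prop :=
| Dhyp g : G g -> Der G g
| Dthm g : Thm g -> Der G g
| Dmp a b : Der G (Imp a b) -> Der G a -> Der G b.

Lemma Der_mono G H g : Der G g -> (forall x, G x -> H x) -> Der H g.
Proof. induction 1; intros; [apply Dhyp | apply Dthm | eapply Dmp]; eauto. Qed.

Lemma Der_empty g : Der (fun _ => False) g -> Thm g.
Proof. induction 1; [contradiction | auto | eapply mp; eauto]. Qed.

Lemma DT G a b : Der (fun x => G x \/ x = a) b -> Der G (Imp a b).
Proof.
  induction 1.
  - destruct H as [H|H].
    + eapply Dmp. apply Dthm, ax, A_K. apply Dhyp, H.
    + subst. apply Dthm, imp_refl.
  - eapply Dmp. apply Dthm, ax, A_K. apply Dthm, H.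
  - eapply Dmp. eapply Dmp. apply Dthm, ax, A_S. eauto. eauto.
Qed.

Fixpoint ch (G : form -> Prop) (psi : form) (n : nat) : form -> Prop :=
  match n with
  | 0 => G
  | S m => fun g => ch G psi m g \/
             (g = enum m /\ ~ Der (fun x => ch G psi m x \/ x = enum m) psi)
  end.

Lemma ch_mono G psi n m g : n <= m -> ch G psi n g -> ch G psi m g.
Proof. induction 1; simpl; auto. Qed.

Lemma ch_cons G psi : ~ Der G psi -> forall n, ~ Der (ch G psi n) psi.
Proof.
  intros H0 n; induction n; simpl; auto.
  intro H. destruct (classic (Der (fun x => ch G psi n x \/ x = enum n) psi)) as [H1|H1].
  - apply IHn. eapply Der_mono; [exact H|]. intros x [Hx|[_ Hx]]; tauto.
  - apply H1. eapply Der_mono; [exact H|]. intros x [Hx|[Hx _]]; tauto.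
Qed.

Definition ptheory (D : form -> Prop) : Prop :=
  (forall g, Der D g -> D g) /\ (forall a b, D (Or a b) -> D a \/ D b) /\ ~ D Bot.

Lemma lindenbaum G psi : ~ Der G psi ->
  exists D, ptheory D /\ (forall g, G g -> D g) /\ ~ D psi.
Proof.
  intro H0.
  set (D := fun g => exists n, ch G psi n g).
  assert (Hcomp : forall g, Der D g -> exists n, Der (ch G psi n) g).
  { induction 1.
    - destruct H as [n Hn]. exists n. apply Dhyp, Hn.
    - exists 0. apply Dthm, H.
    - destruct IHDer1 as [n1 K1], IHDer2 as [n2 K2]. exists (max n1 n2).
      eapply Dmp.
      + eapply Der_mono; [exact K1|]. intros; eapply ch_mono; [|eauto]. apply Nat.le_max_l.
      + eapply Der_mono; [exact K2|]. intros; eapply ch_mono; [|eauto]. apply Nat.le_max_r. }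
  assert (Hcons : ~ Der D psi).
  { intro H. destruct (Hcomp _ H) as [n Hn]. exact (ch_cons G psi H0 n Hn). }
  assert (Hmax : forall c, ~ Der (fun x => D x \/ x = c) psi -> D c).
  { intros c Hc. destruct (enum_surj c) as [n Hn]. exists (S n). simpl. right.
    split; [auto|]. intro H. apply Hc. eapply Der_mono; [exact H|].
    intros x [Hx|Hx]; [left; exists n; auto | right; congruence]. }
  assert (Hcl : forall g, Der D g -> D g).
  { intros g Hg. apply Hmax. intro H. apply DT in H. apply Hcons. eapply Dmp; eauto. }
  exists D. split; [split; [exact Hcl | split] | split].
  - intros a b Hab. apply NNPP. intro Hn.
    assert (Ha : Der (fun x => D x \/ x = a) psi) by (apply NNPP; intro; apply Hn; left; auto).
    assert (Hb : Der (fun x => D x \/ x = b) psi) by (apply NNPP; intro; apply Hn; right; auto).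
    apply DT in Ha. apply DT in Hb. apply Hcons.
    eapply Dmp. eapply Dmp. eapply Dmp. apply Dthm, ax, A_OrE. exact Ha. exact Hb. apply Dhyp, Hab.
  - intro HB. apply Hcons. eapply Dmp. apply Dthm, ax, A_Bot. apply Dhyp, HB.
  - intros g Hg. exists 0. exact Hg.
  - intro H. apply Hcons, Dhyp, H.
Qed.

Lemma lind G psi : ~ Der G psi ->
  exists D, ptheory D /\ (forall g, G g -> D g) /\ ~ D psi.
Proof. exact (lindenbaum G psi). Qed.

Definition W := {D : form -> Prop | ptheory D}.
Definition Wle (x y : W) : Prop := forall g, proj1_sig x g -> proj1_sig y g.
Definition WR (a : W -> Prop) (x y : W) : Prop :=
  forall phi psi, (forall z, a z <-> proj1_sig z phi) ->
    proj1_sig x (Cond phi psi) -> proj1_sig y psi.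

Lemma Wle_refl x : Wle x x. Proof. intros g H; exact H. Qed.
Lemma Wle_trans x y z : Wle x y -> Wle y z -> Wle x z. Proof. intros H1 H2 g H; auto. Qed.
Lemma W_coh : forall a, upset Wle a ->
    forall x y z, Wle x y -> WR a y z -> exists w, WR a x w /\ Wle w z.
Proof. intros a _ x y z Hxy Hyz. exists z. split; [|apply Wle_refl].
  intros phi psi Ha Hc. apply (Hyz phi psi Ha). apply Hxy, Hc. Qed.

Definition canon (w : W) : frame :=
  {| world := W; fle := Wle; fR := WR; f_inhabited := inhabits w;
     fle_refl := Wle_refl; fle_trans := Wle_trans; f_coh := W_coh |}.

Lemma W_closed (x : W) g : Der (proj1_sig x) g -> proj1_sig x g.
Proof. destruct x as [D HD]; simpl; apply HD. Qed.
Lemma W_thm (x : W) g : Thm g -> proj1_sig x g.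
Proof. intro; apply W_closed, Dthm; auto. Qed.
Lemma W_mp (x : W) a b : proj1_sig x (Imp a b) -> proj1_sig x a -> proj1_sig x b.
Proof. intros; apply W_closed; eapply Dmp; apply Dhyp; eauto. Qed.
Lemma W_prime (x : W) a b : proj1_sig x (Or a b) -> proj1_sig x a \/ proj1_sig x b.
Proof. destruct x as [D HD]; simpl; apply HD. Qed.
Lemma W_nbot (x : W) : ~ proj1_sig x Bot.
Proof. destruct x as [D HD]; simpl; apply HD. Qed.

Lemma canon_refl w : refl_cond (canon w).
Proof.
  intros a _ x Hx. exists x. split; [|apply Wle_refl].
  intros phi psi Ha Hc. apply Ha in Hx.
  eapply W_mp. apply W_thm, (thm_MP phi psi).
  eapply W_mp. eapply W_mp. apply W_thm, ax, A_AndI. exact Hx. exact Hc.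
Qed.

Lemma lindW G psi : ~ Der G psi -> exists x : W, (forall g, G g -> proj1_sig x g) /\ ~ proj1_sig x psi.
Proof. intro H. destruct (lind G psi H) as [D [HD [H1 H2]]]. exists (exist _ D HD); auto. Qed.

Lemma equiv_thm a b : (forall z : W, proj1_sig z a -> proj1_sig z b) -> Thm (Imp a b).
Proof.
  intro H. apply NNPP. intro Hn.
  assert (Hd : ~ Der (fun x => x = a) b).
  { intro Hd. apply Hn, Der_empty, DT. eapply Der_mono; [exact Hd|]. intros x Hx; right; auto. }
  destruct (lindW _ _ Hd) as [z [Hz1 Hz2]]. apply Hz2, H, Hz1; reflexivity.
Qed.

Definition CV (w : W) : valuation (canon w) := fun n (x : W) => proj1_sig x (Var n).

Lemma truth w f : forall x : W, forces (canon w) (CV w) x f <-> proj1_sig x f.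
Proof.
  induction f; intro x; simpl.
  - unfold CV; tauto.
  - split; [tauto | apply W_nbot].
  - rewrite IHf1, IHf2. split.
    + intros [H1 H2]. eapply W_mp. eapply W_mp. apply W_thm, ax, A_AndI. exact H1. exact H2.
    + intro H. split; (eapply W_mp; [apply W_thm, ax|exact H]). apply A_AndE1. apply A_AndE2.
  - rewrite IHf1, IHf2. split.
    + intros [H|H]; (eapply W_mp; [apply W_thm, ax|exact H]). apply A_OrI1. apply A_OrI2.
    + apply W_prime.
  - split.
    + intro H. apply NNPP. intro Hn.
      assert (Hd : ~ Der (fun g => proj1_sig x g \/ g = f1) f2).
      { intro Hd. apply Hn, W_closed, DT, Hd. }
      destruct (lindW _ _ Hd) as [y [Hy1 Hy2]].
      apply Hy2, IHf2, H.
      * intros g Hg; apply Hy1; auto.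
      * apply IHf1, Hy1; auto.
    + intros H y Hxy Hy. apply IHf2. apply IHf1 in Hy. eapply W_mp; [apply Hxy, H | exact Hy].
  - split.
    + intro H. apply NNPP. intro Hn.
      assert (Hd : ~ Der (fun g => proj1_sig x (Cond f1 g)) f2).
      { intro Hd. apply Hn. clear -Hd. induction Hd.
        - exact H.
        - apply W_thm, cond_thm, H.
        - eapply W_mp. apply W_thm, cond_mono with (P := And (Imp a b) a).
          eapply mp. eapply mp. apply ax, A_S. apply ax, A_AndE1. apply ax, A_AndE2.
          eapply W_mp. apply W_thm, iff_r, thm_and.
          eapply W_mp. eapply W_mp. apply W_thm, ax, A_AndI. exact IHHd1. exact IHHd2. }
      destruct (lindW _ _ Hd) as [y [Hy1 Hy2]].
      apply Hy2, IHf2, H.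
      intros phi psi Ha Hc. apply Hy1.
      assert (E : Thm (Iff f1 phi)).
      { apply iff_intro; apply equiv_thm; intros z Hz.
        - apply Ha, IHf1, Hz.
        - apply IHf1, Ha, Hz. }
      eapply W_mp. apply W_thm, iff_r, (D_congL _ _ _ psi E). exact Hc.
    + intros H y Hy. apply IHf2. apply (Hy f1 f2); auto.
Qed.

Theorem proposition5p8 :
  forall f : form,
    ICK_plus Gamma_MP f <-> (forall F : frame, refl_cond F -> valid_in F f).
Proof.
  intro f. split.
  - apply soundness.
  - intro H. apply NNPP. intro Hn.
    assert (Hd : ~ Der (fun _ => False) f) by (intro Hd; apply Hn, Der_empty, Hd).
    destruct (lindW _ _ Hd) as [w [_ Hw]].
    apply Hw. apply (truth w f w). apply (H (canon w) (canon_refl w) (CV w)).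
    intros n u v Huv Hu. apply Huv, Hu.
Qed.
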